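(* Let $R$ be a finite chain ring and let $C\subseteq R^n$ be a nonzero $R$-linear code of length $n$, rank $K$, locality $r\ge 1$ and minimum distance $d$. Then $$d\le n-K-\left\lceil\frac{K}{r}\right\rceil+2.$$
   Context: A finite chain ring is a finite commutative local ring whose ideals are totally ordered by inclusion. An $R$-linear code is an $R$-submodule $C\subseteq R^n$. The rank of $C$ is the minimum $K$ such that there is an $R$-module monomorphism $C\to R^K$. A coordinate $i$ has locality $r$ if there is $S_i\subseteq\{1,\dots,n\}\setminus\{i\}$ with $|S_i|\le r$ and $|C_{S_i}|=|C_{S_i\cup\{i\}}|$, where $C_S$ is the code punctured to the coordinates in $S$; $C$ has locality $r$ if every coordinate does. $d$ is the minimum Hamming weight of a nonzero codeword. *)

(* Defs.v *)
From HB Require Import structures.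
From mathcomp Require Import all_boot all_order all_algebra.
Set Implicit Arguments. Unset Strict Implicit. Unset Printing Implicit Defensive.
Import GRing.Theory.
Local Open Scope ring_scope.

Definition is_ideal (R : finComNzRingType) (I : {set R}) : Prop :=
  [/\ 0 \in I,
      (forall x y, x \in I -> y \in I -> x + y \in I) &
      (forall a x, x \in I -> a * x \in I)].

Definition is_maximal_ideal (R : finComNzRingType) (M : {set R}) : Prop :=
  [/\ is_ideal M, M != setT &
      (forall J : {set R}, is_ideal J -> M \subset J -> J = M \/ J = setT)].

Definition is_local_ring (R : finComNzRingType) : Prop :=
  exists M : {set R}, is_maximal_ideal M /\
    forall M' : {set R}, is_maximal_ideal M' -> M' = M.

(* finite chain ring: finite commutative local ring whose ideals are totally
   ordered by inclusion (finiteness and commutativity come from the type). *)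
Definition is_chain_ring (R : finComNzRingType) : Prop :=
  is_local_ring R /\
  forall I J : {set R}, is_ideal I -> is_ideal J -> (I \subset J) || (J \subset I).

Definition is_linear_code (R : finComNzRingType) (n : nat) (C : {set 'rV[R]_n}) : Prop :=
  [/\ 0 \in C,
      (forall x y, x \in C -> y \in C -> x + y \in C) &
      (forall (a : R) x, x \in C -> a *: x \in C)].

Definition code_mono (R : finComNzRingType) (n K : nat) (C : {set 'rV[R]_n})
  (f : 'rV[R]_n -> 'rV[R]_K) : Prop :=
  (forall (a : R) x y, x \in C -> y \in C -> f (a *: x + y) = a *: f x + f y) /\
  {in C &, injective f}.

Definition code_rank (R : finComNzRingType) (n : nat) (C : {set 'rV[R]_n}) (K : nat) : Prop :=
  (exists f : 'rV[R]_n -> 'rV[R]_K, code_mono C f) /\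
  forall K' : nat, (exists f : 'rV[R]_n -> 'rV[R]_K', code_mono C f) -> (K <= K')%N.

(* C_S: the code punctured to coordinates in S (other coordinates zeroed,
   which gives a set in bijection with the restrictions to S). *)
Definition puncture (R : finComNzRingType) (n : nat) (S : {set 'I_n})
  (C : {set 'rV[R]_n}) : {set 'rV[R]_n} :=
  [set (\row_i (if i \in S then c 0 i else 0)) | c : 'rV[R]_n in C].

Definition has_locality (R : finComNzRingType) (n : nat) (C : {set 'rV[R]_n}) (r : nat) : Prop :=
  forall i : 'I_n, exists S : {set 'I_n},
    [/\ i \notin S, (#|S| <= r)%N & #|puncture S C| = #|puncture (i |: S) C|].

Definition wt (R : finComNzRingType) (n : nat) (c : 'rV[R]_n) : nat :=
  #|[set i : 'I_n | c 0 i != 0]|.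

Definition min_distance (R : finComNzRingType) (n : nat) (C : {set 'rV[R]_n}) (d : nat) : Prop :=
  (exists2 c : 'rV[R]_n, c \in C & c != 0 /\ wt c = d) /\
  forall c : 'rV[R]_n, c \in C -> c != 0 -> (d <= wt c)%N.

Definition ceil_div (a b : nat) : nat := ((a + b.-1) %/ b)%N.

(* Main.v *)
Require Import Defs.
From mathcomp Require Import all_boot all_order all_algebra.
From mathcomp Require Import zify.
From Stdlib Require Import Classical.
Import GRing.Theory.
Set Implicit Arguments. Unset Strict Implicit.
Local Open Scope ring_scope.

Lemma arith1 (a u s w j : nat) : (a <= u + s)%N -> (u + j <= w)%N -> (a + j.+1 <= 1 + (w + s))%N.
Proof. lia. Qed.

Lemma arith2 (d K n u w wc ce : nat) : (u + ce.-1 <= w)%N -> (K <= u + 1)%N -> (d <= wc)%N ->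
  (wc <= n - w)%N -> (1 <= ce)%N -> (w <= n)%N -> (d%:Z <= n%:Z - K%:Z - ce%:Z + 2)%R.
Proof. case: ce => [|ce] /=; first by []. lia. Qed.

Section Helpers.
Variables (R : finComNzRingType) (n : nat) (C : {set 'rV[R]_n}).

Definition van (U : {set 'I_n}) (c : 'rV[R]_n) := forall k, k \in U -> c 0 k = 0.
Definition imp (U W : {set 'I_n}) := forall c, c \in C -> van U c -> van W c.

Lemma det_rank (K : nat) (U : {set 'I_n}) : is_linear_code C -> code_rank C K ->
  (forall c, c \in C -> van U c -> c = 0) -> (K <= #|U|)%N.
Proof.
move=> [C0 CD CZ] [_ Hmin] Hdet. apply: Hmin.
exists (fun c => \row_(j < #|U|) c 0 (enum_val j)). split.
- by move=> a x y _ _; apply/rowP=> j; rewrite !mxE.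
- move=> x y xC yC /rowP Hxy. apply/eqP; rewrite -subr_eq0; apply/eqP.
  apply: Hdet.
    have -> : x - y = (-1) *: y + x by rewrite scaleN1r addrC.
    by apply: CD => //; apply: CZ.
  move=> k kU. have := Hxy (enum_rank_in kU k). rewrite !mxE enum_rankK_in // => ->.
  by rewrite ?mxE subrr.
Qed.

Lemma loc_van (i : 'I_n) (S : {set 'I_n}) :
  0 \in C -> #|puncture S C| = #|puncture (i |: S) C| ->
  forall c, c \in C -> van S c -> c 0 i = 0.
Proof.
move=> C0 hcard c cC hc.
pose g (S0 : {set 'I_n}) (v : 'rV[R]_n) := (\row_k (if k \in S0 then v 0 k else 0) : 'rV[R]_n).
have gg : forall v, g S (g (i |: S) v) = g S v.
  move=> v; apply/rowP=> k; rewrite !mxE; case: ifP => // kS.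
  by rewrite (setU1r _ kS).
have e1 : puncture S C = g S @: (g (i |: S) @: C).
  rewrite -imset_comp; apply: eq_imset => v /=; by rewrite gg.
have hinj : {in g (i |: S) @: C &, injective (g S)}.
  apply/imset_injP; rewrite -e1 hcard; done.
have : g (i |: S) c = g (i |: S) 0.
  apply: hinj; [exact: imset_f | exact: imset_f |].
  rewrite !gg; apply/rowP=> k; rewrite !mxE; case: ifP => // kS.
  by rewrite hc.
move/rowP/(_ i); rewrite !mxE setU11 => ->; by rewrite ?mxE.
Qed.

Lemma van_wt (W : {set 'I_n}) c : van W c -> (wt c <= n - #|W|)%N.
Proof.
move=> hW. rewrite /wt.
have -> : (n - #|W| = #|~: W|)%N.
  by have := cardsC W; rewrite card_ord; lia.
apply: subset_leq_card; apply/subsetP=> k; rewrite !inE; apply: contra => kW.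
by rewrite hW.
Qed.

End Helpers.

Theorem mainTheorem3 (R : finComNzRingType) (n : nat) (C : {set 'rV[R]_n})
  (K r d : nat) :
  is_chain_ring R ->
  is_linear_code C ->
  C != [set 0] ->
  code_rank C K ->
  (1 <= r)%N ->
  has_locality C r ->
  min_distance C d ->
  (d%:Z <= n%:Z - K%:Z - (ceil_div K r)%:Z + 2)%R.
Proof.
move=> _ Hlin _ Hrank r1 Hloc [[c0 c0C [c0n wc0]] Hmind].
have Hdn : (d <= n)%N.
  have v0 : van set0 c0 by move=> k; rewrite inE.
  have := van_wt v0.
  by rewrite cards0 subn0 wc0.
case: (posnP K) => [K0|Kpos].
  subst K. rewrite /ceil_div.
  have -> : ((0 + r.-1) %/ r = 0)%N by rewrite add0n divn_small // prednK.
  lia.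
have C0 : 0 \in C by case: Hlin.
pose l := (ceil_div K r).-1.
have hceil1 : (1 <= ceil_div K r)%N.
  rewrite /ceil_div divn_gt0; last by lia. lia.
have hlr : (l * r < K)%N.
  have := leq_trunc_div (K + r.-1) r. rewrite /l /ceil_div. 
  set q := ((K + r.-1) %/ r)%N => hq. have : (q * r < K + r)%N by lia.
  have : (1 <= q)%N by exact: hceil1.
  case: q {hq} => // q _ . rewrite mulSn /=. lia.
have step_full : forall U W : {set 'I_n}, imp C U W -> (#|U| < K)%N -> W != setT.
  move=> U W hUW hU; apply/negP => /eqP WT.
  suff : (K <= #|U|)%N by lia.
  apply: (det_rank Hlin Hrank).
  move=> c cC vU; apply/rowP=> k; rewrite mxE.
  by apply: (hUW c cC vU); rewrite WT inE.
have phase1 : forall j, (j * r < K)%N -> exists U W : {set 'I_n},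
   [/\ U \subset W, imp C U W, (#|U| <= j * r)%N & (#|U| + j <= #|W|)%N].
  elim=> [|j IH] hj.
    exists set0, set0; split => //; by [apply: sub0set | rewrite cards0].
  have hj' : (j * r < K)%N by rewrite mulSn in hj; lia.
  have [U [W [sUW hUW hU hW]]] := IH hj'.
  have /subsetPn [x _ xW] : ~~ (setT \subset W).
    by rewrite subTset; apply: step_full hUW _; lia.
  have [S [xS Sr Scard]] := Hloc x.
  have hS := loc_van C0 Scard.
  exists (U :|: (S :\: W)), (x |: (W :|: S)); split.
  - apply/subsetP=> k; rewrite !inE => /orP [kU|/andP [_ kS]].
      by rewrite (subsetP sUW k kU) orbT.
    by rewrite kS !orbT.
  - move=> c cC vU'.
    have vW : van W c by apply: hUW => // k kU; apply: vU'; rewrite inE kU.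
    have vS : van S c.
      move=> k kS; case kW: (k \in W); first by apply: vW.
      by apply: vU'; rewrite !inE kW kS orbT.
    have cx := hS c cC vS.
    move=> k; rewrite !inE => /orP [/eqP -> //|/orP [kW|kS]]; by [apply: vW|apply: vS].
  - have h1 : (#|U :|: (S :\: W)| <= #|U| + #|S :\: W|)%N by rewrite cardsU leq_subr.
    have h2 : (#|S :\: W| <= #|S|)%N by apply: subset_leq_card; apply: subsetDl.
    rewrite mulSn. lia.
  - have h1 : (#|U :|: (S :\: W)| <= #|U| + #|S :\: W|)%N by rewrite cardsU leq_subr.
    have xWS : x \notin W :|: S by rewrite !inE negb_or xW xS.
    rewrite cardsU1 xWS /=.
    have h3 := cardsU W S. have h4 := cardsID W S. rewrite setIC in h3.
    have h5 : (#|W :&: S| <= #|W|)%N by apply: subset_leq_card; apply: subsetIl.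
    have h6 : (#|S :&: W| <= #|S|)%N by apply: subset_leq_card; apply: subsetIl.
    rewrite setIC in h5.
    have e : #|W :|: S| = (#|W| + #|S :\: W|)%N by lia.
    rewrite e. exact: (arith1 h1 hW).
have [U [W [sUW hUW hU hW]]] := phase1 l hlr.
have phase2 : forall m (U W : {set 'I_n}), U \subset W -> imp C U W -> (#|U| + l <= #|W|)%N ->
    (#|U| < K)%N -> (K <= #|U| + m.+1)%N ->
    exists U' W' : {set 'I_n}, [/\ imp C U' W', (#|U'| + l <= #|W'|)%N,
       (#|U'| < K)%N & (K <= #|U'| + 1)%N].
  elim=> [|m IH] U0 W0 s0 h0 c0' k0 k0'.
    by exists U0, W0; split.
  case: (leqP K (#|U0| + 1)) => hK; first by exists U0, W0; split.
  have /subsetPn [x _ xW] : ~~ (setT \subset W0).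
    by rewrite subTset; apply: step_full h0 _.
  have xU : x \notin U0 by apply: contra xW; apply: (subsetP s0).
  apply: (IH (x |: U0) (x |: W0)).
  - by apply: setUS.
  - move=> c cC vU'.
    have vW : van W0 c by apply: h0 => // k kU; apply: vU'; rewrite in_setU1 kU orbT.
    move=> k; rewrite in_setU1 => /orP [/eqP ->|]; last by apply: vW.
    by apply: vU'; rewrite setU11.
  - by rewrite !cardsU1 xU xW /= -addnA leq_add2l.
  - by rewrite cardsU1 xU /= addnC.
  - by rewrite cardsU1 xU /= add1n addSn -addnS.
have hUK : (#|U| < K)%N by lia.
have hWn : forall W0 : {set 'I_n}, (#|W0| <= n)%N.
  by move=> W0; rewrite -[X in (_ <= X)%N]card_ord max_card.
have [U' [W' [hUW' hW' hU'K hKU']]] := phase2 (K - #|U|).-1 U W sUW hUW hW hUK ltac:(lia).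
have : ~ (forall c, c \in C -> van U' c -> c = 0).
  move=> H; have := det_rank Hlin Hrank H; lia.
move=> /not_all_ex_not [c /not_all_ex_not [cC /not_all_ex_not [vU cn]]].
have cn' : c != 0 by apply/eqP.
exact: (arith2 hW' hKU' (Hmind c cC cn') (van_wt (hUW' c cC vU)) hceil1 (hWn W')).
Qed.
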